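(* Under the standing setup below, for each $i\in\{1,2\}$, every connected component of the graph obtained from $G_i$ by deleting all vertices of $p_i$ is adjacent to exactly two vertices of $p_i$.
   Context: A biconnected graph is series-parallel if it contains no subdivision of $K_4$. A separation pair of a biconnected graph $G$ is a pair $(s,t)$ with $G-s-t$ disconnected; a transitive edge is an edge joining the two vertices of a separation pair. A component w.r.t. $(s,t)$ is the subgraph induced by $s$, $t$ and the vertex set of one connected component of $G-s-t$; vertices other than $s,t$ are internal. A component is heavy if it has an internal vertex adjacent to neither $s$ nor $t$. Standing setup: $G$ is a biconnected series-parallel graph without transitive edges such that every separation pair has at most two heavy components, and $G$ has at least one separation pair. $(s,t)$ is a separation pair of $G$ whose number $k$ of heavy components is maximum over all separation pairs. $G_1$ and $G_2$ are two distinct components w.r.t. $(s,t)$, chosen so that $G_1$ is heavy if $k\ge 1$ and $G_2$ is heavy if $k=2$. For $i\in\{1,2\}$, $p_i$ is a longest $s$–$t$ path in $G_i$. *)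

(* Defs.v *)
(* A finite simple graph is a symmetric irreflexive
   relation e on a finType T (vertex set = all of T). *)
From mathcomp Require Import all_boot.
Set Implicit Arguments. Unset Strict Implicit. Unset Printing Implicit Defensive.

Section Graphs.
Variables (T : finType) (e : rel T).

Definition simple_graph : Prop := symmetric e /\ irreflexive e.

Definition induced (S : {set T}) : rel T :=
  fun a b => [&& a \in S, b \in S & e a b].

Definition connected_set (S : {set T}) : Prop :=
  forall x y, x \in S -> y \in S -> connect (induced S) x y.

Definition compo (S : {set T}) (x : T) : {set T} :=
  [set y in S | connect (induced S) x y].

Definition components (S : {set T}) : {set {set T}} :=
  [set compo S x | x in S].

Definition biconnected : Prop :=
  2 < #|T| /\ connected_set setT /\ forall v, connected_set (~: [set v]).

(* a simple path from x to y with internal vertex list q: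
   the walk is x :: rcons q y *)
Definition simple_path_int (x y : T) (q : seq T) : bool :=
  path e x (rcons q y) && uniq (x :: rcons q y).

Definition has_K4_subdivision : Prop :=
  exists (f : 'I_4 -> T) (P : 'I_4 -> 'I_4 -> seq T),
    injective f /\
    (forall i j : 'I_4, i < j -> simple_path_int (f i) (f j) (P i j)) /\
    (forall (i j : 'I_4) (k : 'I_4), i < j -> f k \notin P i j) /\
    (forall i j i' j' : 'I_4, i < j -> i' < j' -> (i, j) <> (i', j') ->
        forall v, v \in P i j -> v \notin P i' j').

Definition series_parallel : Prop := biconnected /\ ~ has_K4_subdivision.

Definition separation_pair (s t : T) : Prop :=
  s != t /\ ~ connected_set (~: [set s; t]).

Definition no_transitive_edges : Prop :=
  forall s t, separation_pair s t -> ~~ e s t.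

(* components w.r.t. (s,t) are given by their sets D of internal vertices
   (D ranging over components (~: [set s; t])) *)
Definition heavy (s t : T) (D : {set T}) : bool :=
  [exists v in D, ~~ e v s && ~~ e v t].

Definition nheavy (s t : T) : nat :=
  #|[set D in components (~: [set s; t]) | heavy s t D]|.

(* q is an s-t path in the component with internal vertices D:
   the walk s :: q is a simple path ending at t, inside D ∪ {s,t} *)
Definition st_path_in (s t : T) (D : {set T}) (q : seq T) : bool :=
  [&& path (induced (D :|: [set s; t])) s q, last s q == t & uniq (s :: q)].

Definition longest_st_path (s t : T) (D : {set T}) (q : seq T) : Prop :=
  st_path_in s t D q /\
  forall q', st_path_in s t D q' -> size q' <= size q.

Definition attach_two (s : T) (D : {set T}) (q : seq T) : Prop :=
  forall X, X \in components (D :\: [set x | x \in s :: q]) ->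
    #|[set v | (v \in s :: q) && [exists u in X, e u v]]| = 2.

End Graphs.

(* Main.v *)
Require Import Defs.
From mathcomp Require Import all_boot zify.
Set Warnings "-notation-overridden".
Set Implicit Arguments. Unset Strict Implicit. Unset Printing Implicit Defensive.

Section Aux.
Variables (T : finType) (e : rel T).
Hypothesis esym : symmetric e.
Implicit Types (x y u w : T) (p : seq T) (S C : {set T}).

Lemma path_drop x p i : path e x p -> path e (last x (take i p)) (drop i p).
Proof. by rewrite -{1}(cat_take_drop i p) cat_path => /andP[]. Qed.

Lemma last_take_nth x p i : i < size p -> last x (take i.+1 p) = nth x p i.
Proof. by move=> hi; rewrite (take_nth x hi) last_rcons. Qed.

Lemma last_take_cons x p i : i <= size p -> last x (take i p) = nth x (x :: p) i.
Proof.
case: i => [|i] hi; first by rewrite take0.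
by rewrite last_take_nth.
Qed.

Lemma path_rev x p y : path e x (rcons p y) -> path e y (rcons (rev p) x).
Proof.
move=> h.
have : path (fun z => e^~ z) x (rcons p y).
  by rewrite (eq_path (e' := e)) // => u v; rewrite esym.
by rewrite -rev_path belast_rcons last_rcons rev_cons.
Qed.

Lemma induced_e S x y : induced e S x y -> e x y.
Proof. by case/and3P. Qed.

Lemma path_induced S x p : path (induced e S) x p -> path e x p /\ {subset p <= S}.
Proof.
elim: p x => [|h p IH] x //= /andP[/and3P[_ hS he] /IH[hp hs]].
split; first by rewrite he.
by move=> v; rewrite inE => /orP[/eqP->|/hs].
Qed.

Lemma compo_sub S C u : C \in components e S -> u \in C -> u \in S.
Proof. by case/imsetP=> x _ -> ; rewrite inE => /andP[]. Qed.

Lemma compo_closed S C u w : C \in components e S -> u \in C -> w \in S -> e u w -> w \in C.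
Proof.
case/imsetP=> x xS -> ; rewrite !inE => /andP[uS cxu] wS euw.
rewrite wS /=; apply: connect_trans cxu _; apply: connect1.
by rewrite /induced uS wS.
Qed.

Lemma compo_mem S C : C \in components e S -> exists x, x \in C.
Proof.
case/imsetP=> x xS -> ; exists x; by rewrite inE xS connect0.
Qed.

Lemma induced_sym S : symmetric (induced e S).
Proof. by move=> x y; rewrite /induced esym andbCA. Qed.

Lemma connect_stay S C x y : (forall u w, u \in C -> induced e S u w -> w \in C) ->
  x \in C -> connect (induced e S) x y -> connect (induced e C) x y.
Proof.
move=> hC xC /connectP[p hp ->].
elim: p x xC hp => [|h p IH] x xC //= /andP[hxh hp].
have hC' : h \in C by exact: hC hxh.
apply: connect_trans (IH h hC' hp); apply: connect1.
by rewrite /induced xC hC' (induced_e hxh).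
Qed.

Lemma compo_conn S C u w : C \in components e S -> u \in C -> w \in C ->
  connect (induced e C) u w.
Proof.
move=> hC uC wC; apply: (@connect_stay S) => //.
  move=> u' w' u'C /and3P[_ w'S euw]; exact: compo_closed hC u'C w'S euw.
case/imsetP: hC uC wC => x xS -> ; rewrite !inE => /andP[_ cxu] /andP[_ cxw].
apply: connect_trans cxw; by rewrite (sym_connect_sym (induced_sym S)).
Qed.

Lemma compo_disj S C C' u : C \in components e S -> C' \in components e S ->
  C != C' -> u \in C -> u \notin C'.
Proof.
move=> hC hC' neq uC; apply/negP => uC'; move/negP: neq; apply.
case/imsetP: hC uC => x xS -> ; case/imsetP: hC' uC' => y yS -> .
rewrite !inE => /andP[_ cyu] /andP[_ cxu].
have hs := sym_connect_sym (induced_sym S).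
apply/eqP/setP => z; rewrite !inE; case: (z \in S) => //=.
have ux : connect (induced e S) u x by rewrite hs.
have uy : connect (induced e S) u y by rewrite hs.
apply/idP/idP => h.
  exact: connect_trans (connect_trans cyu ux) h.
exact: connect_trans (connect_trans cxu uy) h.
Qed.

Lemma crossing S (A : {set T}) x y : connect (induced e S) x y -> x \in A -> y \notin A ->
  exists u w, [/\ u \in A, w \notin A, w \in S & e u w].
Proof.
move=> /connectP[p hp ->]; elim: p x hp => [|h p IH] x /=; first by move=> _ ->.
case/andP=> /and3P[_ hS he] hp xA.
case hA: (h \in A); first exact: IH hp hA.
by move=> _; exists x, h; rewrite hA.
Qed.

Lemma upath (A : {set T}) u w : connect (induced e A) u w ->
  exists p, [/\ path e u p, last u p = w, uniq (u :: p) & {subset p <= A}].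
Proof. 
case/connectP=> p hp ->; case: (shortenP hp) => p' hp' hu hsub.
have [h1 h2] := path_induced hp'.
by exists p'.
Qed.

Lemma index_catR (A B : seq T) v : v \notin A -> index v (A ++ B) = size A + index v B.
Proof. by move=> h; rewrite index_cat (negbTE h). Qed.

Lemma uniq_catR (A B : seq T) v : uniq (A ++ B) -> v \in B -> v \notin A.
Proof.
rewrite cat_uniq => /and3P[_ /hasPn h _] vB; exact: h.
Qed.

Lemma idx_drop (s0 : seq T) d v : uniq s0 -> v \in drop d s0 -> d <= index v s0.
Proof.
move=> us vd.
have hd : d <= size s0.
  rewrite leqNgt; apply/negP => h; move: vd; rewrite drop_oversize //; exact: ltnW.
have : uniq (take d s0 ++ drop d s0) by rewrite cat_take_drop.
move/uniq_catR => /(_ v vd) vt.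
rewrite -{1}(cat_take_drop d s0) index_catR // size_take.
case: ltnP => h; lia.
Qed.

Lemma simple_of x y P : uniq P -> x \notin P -> y \notin P -> x != y ->
  path e x (rcons P y) -> simple_path_int e x y P.
Proof.
move=> uP xP yP xy hp; rewrite /simple_path_int hp /= rcons_uniq yP uP mem_rcons inE.
by rewrite (negbTE xy) (negbTE xP).
Qed.

Lemma tripod (X : {set T}) a b c ua ub uc :
  (forall u w, u \in X -> w \in X -> connect (induced e X) u w) ->
  ua \in X -> ub \in X -> uc \in X -> e a ua -> e b ub -> e c uc ->
  exists x L1 L2 L3, [/\ {subset x :: L1 ++ L2 ++ L3 <= X},
     uniq (L1 ++ L2 ++ L3 ++ [:: x]),
     path e a (rcons L1 x), path e b (rcons L2 x) & path e c (rcons L3 x)].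
Proof.
move=> hX uaX ubX ucX eaa ebb ecc.
have [U [pU lU uU sU]] := upath (hX _ _ uaX ubX).
have [V [pV lV uV sV]] := upath (hX _ _ ucX uaX).
set Uf := ua :: U; set Vf := uc :: V.
have UfX : {subset Uf <= X} by move=> v; rewrite inE => /orP[/eqP->|/sU].
have VfX : {subset Vf <= X} by move=> v; rewrite inE => /orP[/eqP->|/sV].
set r3 := find (mem Uf) Vf.
have hasV : has (mem Uf) Vf.
  apply/hasP; exists ua; last exact: mem_head.
  by rewrite -lV mem_last.
set x := nth uc Vf r3.
have xU : x \in Uf by exact: (nth_find uc hasV).
have r3lt : r3 < size Vf by rewrite -has_find.
set L3 := take r3 Vf.
have L3U : ~~ has (mem Uf) L3 by rewrite /L3 has_take // ltnn.
set r := index x Uf.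
have rlt : r < size Uf by rewrite index_mem.
set D := drop r.+1 Uf.
have Ufeq : Uf = take r Uf ++ x :: D.
  by rewrite /D -(nth_index a xU) -(drop_nth a rlt) cat_take_drop.
exists x, (take r Uf), (rev D), L3; split.
- move=> v; rewrite inE !mem_cat mem_rev => /orP[/eqP->|]; first exact: UfX.
  case/or3P=> [/mem_take/UfX //|/mem_drop/UfX //|].
  by move/mem_take/VfX.
- have hp : perm_eq (take r Uf ++ rev D ++ L3 ++ [:: x]) ((take r Uf ++ x :: D) ++ L3).
    rewrite -catA perm_cat2l -cat1s catA perm_catC perm_cat2l.
    rewrite -/cat perm_cat2r; apply/permPl; exact: perm_rev.
  rewrite (perm_uniq hp) -Ufeq cat_uniq uU L3U /=.
  exact: take_uniq.
- rewrite -(nth_index a xU) -/r -take_nth //; apply: take_path; by rewrite /= eaa.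
- apply: path_rev; rewrite rcons_path.
  have hpa : path e a Uf by rewrite /= eaa.
  have := path_drop r.+1 hpa; rewrite last_take_nth // nth_index // => -> /=.
  have : last a Uf = ub by rewrite /= lU.
  rewrite {1}Ufeq last_cat /= => ->; by rewrite esym.
- rewrite /x -take_nth //; apply: take_path; by rewrite /= ecc.
Qed.

End Aux.

Definition Rg (i j k n m l1 l2 l3 u v z : nat) : bool :=
  match u, v with
  | 0, 1 => (i < z < j)
  | 1, 2 => (j < z < k)
  | 0, 2 => (z < i) || (k < z < n + m)
  | 0, 3 => (n + m <= z < n + m + l1)
  | 1, 3 => (n + m + l1 <= z < n + m + l1 + l2)
  | 2, 3 => (n + m + l1 + l2 <= z < n + m + l1 + l2 + l3)
  | _, _ => false
  end.

Definition gf (i j k n m l1 l2 l3 u : nat) : nat :=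
  match u with 0 => i | 1 => j | 2 => k | _ => n + m + l1 + l2 + l3 end.

Lemma Rg_disj i j k n m l1 l2 l3 u v u' v' z : i < j -> j < k -> k < n ->
  u < v < 4 -> u' < v' < 4 -> Rg i j k n m l1 l2 l3 u v z -> Rg i j k n m l1 l2 l3 u' v' z ->
  (u == u') && (v == v').
Proof.
move=> h1 h2 h3.
case: u => [|[|[|[|u]]]]; case: v => [|[|[|[|v]]]] //;
case: u' => [|[|[|[|u']]]]; case: v' => [|[|[|[|v']]]] //= _ _; lia.
Qed.

Lemma Rg_gf i j k n m l1 l2 l3 u v w : i < j -> j < k -> k < n ->
  u < v < 4 -> w < 4 -> ~~ Rg i j k n m l1 l2 l3 u v (gf i j k n m l1 l2 l3 w).
Proof.
move=> h1 h2 h3.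
case: u => [|[|[|[|u]]]]; case: v => [|[|[|[|v]]]] //;
case: w => [|[|[|[|w]]]] //= _ _; lia.
Qed.

Lemma gf_inj i j k n m l1 l2 l3 u v : i < j -> j < k -> k < n ->
  u < 4 -> v < 4 -> gf i j k n m l1 l2 l3 u = gf i j k n m l1 l2 l3 v -> u = v.
Proof.
move=> h1 h2 h3.
case: u => [|[|[|[|u]]]]; case: v => [|[|[|[|v]]]] //= _ _; lia.
Qed.

Lemma range_add (base len z : nat) : z < len -> base <= base + z < base + len.
Proof. lia. Qed.

Lemma absurd_ord i j k z : i < j -> j < k -> k < z -> z < i -> False.
Proof. lia. Qed.

Lemma sub_lt u v n : u < v -> v < n -> v - u.+1 < n - u.+1.
Proof. lia. Qed.

Lemma le_of_lt2 u v z : u < v -> v < z.+1 -> u <= z.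
Proof. lia. Qed.

Section Main.
Variables (T : finType) (e : rel T).
Hypothesis esym : symmetric e.
Hypothesis Hbi : biconnected e.
Variables (s t : T) (C C' X : {set T}) (q : seq T).
Hypothesis Hst : s != t.
Hypothesis HC : C \in components e (~: [set s; t]).
Hypothesis HC' : C' \in components e (~: [set s; t]).
Hypothesis HCC : C != C'.
Hypothesis Hq : st_path_in e s t C q.
Hypothesis HX : X \in components e (C :\: [set x | x \in s :: q]).

Let N := [set v | (v \in s :: q) && [exists u in X, e u v]].

Lemma pq : path e s q.
Proof. by case/and3P: Hq => /(path_induced) []. Qed.

Lemma qsub : {subset q <= C :|: [set s; t]}.
Proof. by case/and3P: Hq => /(path_induced) []. Qed.

Lemma lastq : last s q = t.
Proof. by case/and3P: Hq => _ /eqP. Qed.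

Lemma uniqW : uniq (s :: q).
Proof. by case/and3P: Hq. Qed.

Lemma tW : t \in s :: q.
Proof. by rewrite -lastq mem_last. Qed.

Lemma Wsub v : v \in s :: q -> v \in C :|: [set s; t].
Proof.
rewrite inE => /orP[/eqP->|/qsub //]; by apply/setUP; right; rewrite !inE eqxx.
Qed.

Lemma Xsub u : u \in X -> (u \in C) && (u \notin s :: q).
Proof.
move=> uX; have := compo_sub HX uX; rewrite !inE andbC.
by case: (u \in C); case: (u == s) => //=.
Qed.

Lemma Xnb u w : u \in X -> e u w -> w \notin X -> w \in s :: q.
Proof.
move=> uX euw wX; apply/negPn/negP => wW.
have /andP[uC _] := Xsub uX.
have wC : w \in C.
  case hw: (w \in [set s; t]).
    move: hw; rewrite !inE => /orP[]/eqP hw; move: wW; rewrite hw.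
      by rewrite inE eqxx.
    by rewrite tW.
  by apply: (compo_closed HC uC) => //; rewrite inE hw.
move/negP: wX; apply; apply: (compo_closed HX uX) => //.
by rewrite !inE wC andbT; move: wW; rewrite inE.
Qed.

Lemma partA : 2 <= #|N|.
Proof.
rewrite leqNgt; apply/negP => hN.
have [x0 x0X] := compo_mem HX.
have [v [vW hv]] : exists v, v \in s :: q /\ {subset N <= pred1 v}.
  case: (set_0Vmem N) => [N0|[v vN]].
    by exists s; split; [rewrite inE eqxx | move=> w; rewrite N0 inE].
  exists v; split; first by move: vN; rewrite inE => /andP[].
  by move=> w wN; move/card_le1P: hN => /(_ v vN w); rewrite wN.
set y := if v == s then t else s.
have yv : y != v.
  rewrite /y; case: (v =P s) => [->|/eqP hvs]; first by rewrite eq_sym.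
  by rewrite eq_sym.
have yW : y \in s :: q by rewrite /y; case: ifP => _; [exact: tW | rewrite inE eqxx].
have x0v : x0 != v.
  by apply/eqP => h; have := Xsub x0X; rewrite h vW andbF.
have := (Hbi.2.2 v x0 y); rewrite !inE x0v yv => /(_ isT isT) hc.
have yX : y \notin X by apply/negP => /Xsub; rewrite yW andbF.
have [u [w [uX wX wS euw]]] := crossing hc x0X yX.
have wN : w \in N.
  rewrite inE (Xnb uX euw wX) /=; apply/existsP; exists u; by rewrite uX.
move: wS; rewrite !inE => /negP; apply; exact: hv wN.
Qed.

Lemma attC' z z' : z != z' -> (z == s) || (z == t) -> (z' == s) || (z' == t) ->
  exists u, u \in C' /\ e u z.
Proof.
move=> zz' hz hz'.
have [y0 y0C] := compo_mem HC'.
have y0S := compo_sub HC' y0C.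
have y0z' : y0 != z'.
  apply/eqP => h; move: y0S; rewrite h !inE.
  by case/orP: hz' => ->; rewrite ?orbT.
have zz'2 : z \in ~: [set z'] by rewrite !inE.
have hc := Hbi.2.2 z' y0 z; rewrite !inE in hc; move: {hc}(hc y0z' zz') => hc.
have zC : z \notin C'.
  apply/negP => /(compo_sub HC'); rewrite !inE.
  by case/orP: hz => ->; rewrite ?orbT.
have [u [w [uC wC wS euw]]] := crossing hc y0C zC.
exists u; split => //.
case hw: (w \in [set s; t]).
  move: hw wS; rewrite !inE => hw wz'.
  have -> : z = w => //.
  move: hz hz' hw wz' zz'.
  by case/orP => /eqP->; case/orP => /eqP->; case/orP => /eqP->;
     rewrite ?eqxx //= ?(eq_sym s t) ?(negbTE Hst).
move/negP: wC; case; apply: (compo_closed HC' uC) => //; by rewrite inE hw.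
Qed.

Lemma extpath : exists E, [/\ path e t (rcons E s), uniq E & {subset E <= C'}].
Proof.
have [ut [utC eut]] : exists u, u \in C' /\ e u t.
  by apply: (@attC' t s); rewrite ?eqxx ?orbT // eq_sym.
have [us [usC eus]] : exists u, u \in C' /\ e u s.
  by apply: (@attC' s t); rewrite ?eqxx ?orbT.
have [p [hp hl hu hsub]] := upath (compo_conn esym HC' utC usC).
exists (ut :: p); split => //.
  by rewrite /= rcons_path hp hl esym eut eus.
by move=> v; rewrite inE => /orP[/eqP->|/hsub].
Qed.

Lemma NW v : v \in N -> v \in s :: q.
Proof. by rewrite inE => /andP[]. Qed.

Lemma three : 3 <= #|N| -> exists a b c, [/\ a \in N, b \in N, c \in N &
  index a (s :: q) < index b (s :: q) < index c (s :: q)].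
Proof.
move=> h3.
have [N0|[v0 v0N]] := set_0Vmem N; first by move: h3; rewrite N0 cards0.
have inj : {in N &, forall v w, index v (s :: q) = index w (s :: q) -> v = w}.
  move=> v w vN wN hvw.
  by rewrite -(nth_index s (NW vN)) hvw nth_index // NW.
case: (arg_minnP (fun v => index v (s :: q)) v0N) => a aN amin.
case: (arg_maxnP (fun v => index v (s :: q)) v0N) => c cN cmax.
have : 0 < #|N :\: [set a; c]|.
  rewrite cardsD.
  have : #|N :&: [set a; c]| <= 2.
    apply: leq_trans (subset_leq_card (subsetIr _ _)) _.
    by rewrite cards2; case: (a != c).
  lia.
rewrite card_gt0 => /set0Pn [b] /setDP [bN]; rewrite !inE negb_or => /andP[ba bc].
exists a, b, c; split => //.
have h1 := amin b bN; have h2 : index b (s :: q) <= index c (s :: q) := cmax b bN.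
rewrite !ltn_neqAle h1 h2 !andbT; apply/andP; split.
  by apply/negP => /eqP /(inj _ _ aN bN) /eqP; rewrite eq_sym (negbTE ba).
by apply/negP => /eqP /(inj _ _ bN cN) /eqP; rewrite (negbTE bc).
Qed.

Lemma partB : ~ has_K4_subdivision e -> #|N| <= 2.
Proof.
move=> HK; rewrite leqNgt; apply/negP => /three [a [b [c [aN bN cN /andP[hij hjk]]]]].
apply: HK.
have getu : forall v, v \in N -> exists2 u, u \in X & e v u.
  move=> v; rewrite inE => /andP[_ /existsP[u /andP[uX euv]]].
  by exists u => //; rewrite esym.
have [ua uaX eaa] := getu a aN.
have [ub ubX ebb] := getu b bN.
have [uc ucX ecc] := getu c cN.
have hX : forall u w, u \in X -> w \in X -> connect (induced e X) u w.
  move=> u w uX wX; exact: (compo_conn esym HX uX wX).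
have [x [L1 [L2 [L3 [Tsub Tuniq pa pb pc]]]]] := tripod esym hX uaX ubX ucX eaa ebb ecc.
have [E [pE uE sE]] := extpath.
have aW := NW aN; have bW := NW bN; have cW := NW cN.
set W := s :: q in aW bW cW hij hjk.
set i := index a W in hij; set j := index b W in hij hjk; set k := index c W in hjk.
have kn : k < size W by rewrite index_mem.
have ea : nth s W i = a by rewrite nth_index.
have eb : nth s W j = b by rewrite nth_index.
have ec : nth s W k = c by rewrite nth_index.
set n := size W in kn; set m := size E; set l1 := size L1; set l2 := size L2; set l3 := size L3.
set Trip := L1 ++ L2 ++ L3 ++ [:: x].
set Big := W ++ E ++ Trip.
pose g v := index v Big.
have XW : forall v, v \in X -> v \notin W by move=> v /Xsub /andP[].
have EW : forall v, v \in E -> v \notin W.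
  move=> v /sE vC'; apply/negP => /Wsub; rewrite in_setU => /orP[vC|vst].
    by move: (compo_disj esym HC HC' HCC vC); rewrite vC'.
  by move: (compo_sub HC' vC'); rewrite in_setC vst.
have XE : forall v, v \in X -> v \notin E.
  move=> v vX; apply/negP => /sE; have /andP[vC _] := Xsub vX.
  by rewrite (negbTE (compo_disj esym HC HC' HCC vC)).
have TX : forall v, v \in Trip -> v \in X.
  move=> v hv; apply: Tsub; rewrite inE !mem_cat; move: hv; rewrite !mem_cat inE.
  by case/or4P => h; rewrite h ?orbT.
have gW : forall v, v \in W -> g v = index v W.
  by move=> v vW; rewrite /g /Big index_cat vW.
have gE : forall v, v \in E -> n <= g v < n + m.
  move=> v vE; rewrite /g /Big index_catR ?EW // index_cat vE.
  by apply: range_add; rewrite index_mem.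
have gT : forall v, v \in Trip -> g v = n + m + index v Trip.
  move=> v vT; have vX := TX v vT.
  by rewrite /g /Big index_catR ?XW // index_catR ?XE // addnA.
have u2 : uniq (L2 ++ L3 ++ [:: x]) by move: Tuniq; rewrite cat_uniq => /and3P[].
have u3 : uniq (L3 ++ [:: x]) by move: u2; rewrite cat_uniq => /and3P[].
have gL1 : forall v, v \in L1 -> n + m <= g v < n + m + l1.
  move=> v vL; rewrite gT ?mem_cat ?vL // index_cat vL.
  by apply: range_add; rewrite index_mem.
have gL2 : forall v, v \in L2 -> n + m + l1 <= g v < n + m + l1 + l2.
  move=> v vL; have vT : v \in Trip by rewrite !mem_cat vL orbT.
  rewrite gT // index_catR; last by apply: (uniq_catR Tuniq); rewrite mem_cat vL.
  rewrite index_cat vL addnA; by apply: range_add; rewrite index_mem.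
have gL3 : forall v, v \in L3 -> n + m + l1 + l2 <= g v < n + m + l1 + l2 + l3.
  move=> v vL; have vT : v \in Trip by rewrite !mem_cat vL !orbT.
  rewrite gT // index_catR; last by apply: (uniq_catR Tuniq); rewrite !mem_cat vL orbT.
  rewrite index_catR; last by apply: (uniq_catR u2); rewrite mem_cat vL.
  rewrite index_cat vL !addnA; by apply: range_add; rewrite index_mem.
have gx : g x = n + m + l1 + l2 + l3.
  have xT : x \in Trip by rewrite ?mem_cat inE eqxx ?orbT.
  rewrite gT // index_catR; last by apply: (uniq_catR Tuniq); rewrite ?mem_cat inE eqxx ?orbT.
  rewrite index_catR; last by apply: (uniq_catR u2); rewrite ?mem_cat inE eqxx ?orbT.
  rewrite index_catR; last by apply: (uniq_catR u3); rewrite ?mem_cat inE eqxx ?orbT.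
  by rewrite /= eqxx !addnA addn0.
have gtake : forall d v, v \in take d W -> g v < d.
  by move=> d v vt; rewrite gW ?(mem_take vt) //; exact: index_ltn.
have gdrop : forall d v, v \in drop d W -> d <= g v < n.
  move=> d v vd; have vW := mem_drop vd.
  have h := idx_drop uniqW vd; rewrite gW // h andTb /n index_mem; exact: vW.
have gseg : forall u v w, u < v -> w \in take (v - u.+1) (drop u.+1 W) -> u < g w < v.
  move=> u v w huv hw; have h1 := mem_take hw.
  rewrite take_drop subnK // in hw; have h2 := mem_drop hw.
  by case/andP: (gdrop _ _ h1) => -> _; rewrite (gtake _ _ h2).
pose P01 := take (j - i.+1) (drop i.+1 W).
pose P12 := take (k - j.+1) (drop j.+1 W).
pose Q := drop k.+1 W ++ E ++ take i W.
pose P (u v : nat) : seq T := match u, v with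
  | 0, 1 => P01 | 1, 2 => P12 | 0, 2 => rev Q | 0, 3 => L1 | 1, 3 => L2 | 2, 3 => L3
  | _, _ => [::] end.
pose f (u : nat) := match u with 0 => a | 1 => b | 2 => c | _ => x end.
have jn : j < n := ltn_trans hjk kn.
have iN : i < n := ltn_trans hij jn.
have hgf : forall u, g (f u) = gf i j k n m l1 l2 l3 u.
  move=> u; rewrite /f /gf; case: u => [|[|[|u]]]; rewrite ?gx ?gW //.
have hR : forall u v w, u < v < 4 -> w \in P u v -> Rg i j k n m l1 l2 l3 u v (g w).
  move=> u v w; rewrite /P /Rg; case: u => [|[|[|[|u]]]]; case: v => [|[|[|[|v]]]] // _ hw.
  - exact: gseg hij hw.
  - move: hw; rewrite mem_rev !mem_cat => /or3P[] hw.
    + case/andP: (gdrop _ _ hw) => h1 h2; by rewrite h1 (ltn_addr _ h2) orbT.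
    + case/andP: (gE _ hw) => h1 h2; by rewrite h2 (leq_trans kn h1) orbT.
    + by rewrite (gtake _ _ hw).
  - exact: gL1.
  - exact: gseg hjk hw.
  - exact: gL2.
  - exact: gL3.
have huniq : forall u v, u < v < 4 -> uniq (P u v).
  move=> u v; rewrite /P; case: u => [|[|[|[|u]]]]; case: v => [|[|[|[|v]]]] // _.
  - by apply: take_uniq; apply: drop_uniq; exact: uniqW.
  - rewrite rev_uniq cat_uniq drop_uniq ?uniqW // cat_uniq uE take_uniq ?uniqW // andbT.
    apply/and3P; split => //.
      apply/hasPn => w; rewrite mem_cat => /orP[wE|wt]; apply/negP => wd.
        by move: (EW _ wE); rewrite (mem_drop wd).
      case/andP: (gdrop _ _ wd) => h1 _.
      exact: absurd_ord hij hjk h1 (gtake _ _ wt).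
    apply/hasPn => w wt; apply/negP => wE; by move: (EW _ wE); rewrite (mem_take wt).
  - by move: Tuniq; rewrite cat_uniq => /and3P[].
  - by apply: take_uniq; apply: drop_uniq; exact: uniqW.
  - by move: u2; rewrite cat_uniq => /and3P[].
  - by move: u3; rewrite cat_uniq => /and3P[].
have seg : forall u v, u < v -> v < n ->
    path e (nth s W u) (rcons (take (v - u.+1) (drop u.+1 W)) (nth s W v)).
  move=> u v huv hvn.
  have hsz : v - u.+1 < size (drop u.+1 W) by rewrite size_drop; exact: sub_lt.
  have -> : nth s W v = nth s (drop u.+1 W) (v - u.+1) by rewrite nth_drop subnKC.
  rewrite -take_nth //; apply: take_path.
  have := path_drop u pq; rewrite last_take_cons //; exact: le_of_lt2 huv hvn.
have ec' : nth s (s :: q) k = c := ec.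
have kq : k <= size q by rewrite -ltnS.
have hpath : forall u v, u < v < 4 -> path e (f u) (rcons (P u v) (f v)).
  move=> u v; rewrite /P /f; case: u => [|[|[|[|u]]]]; case: v => [|[|[|[|v]]]] // huv.
  - by rewrite -ea -eb; exact: seg.
  - apply: (path_rev esym); rewrite /Q !rcons_cat -ea -(take_nth s) //.
    change (path e c (drop k q ++ E ++ s :: take i q)).
    have hpc := path_drop k pq; rewrite last_take_cons // ec' in hpc.
    have hl : last c (drop k q) = t.
      by rewrite -lastq -{2}(cat_take_drop k q) last_cat last_take_cons // ec'.
    rewrite cat_path hpc hl /= -cat_rcons cat_path pE last_rcons.
    exact: take_path pq.
  - by rewrite -eb -ec; exact: seg.
  by move: huv => /andP[_]; rewrite !ltnS ltn0.
have finj : forall u v, u < 4 -> v < 4 -> f u = f v -> u = v.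
  move=> u v hu hv h; have h2 := congr1 g h; rewrite !hgf in h2; exact: (gf_inj hij hjk kn hu hv h2).
exists (fun u : 'I_4 => f u), (fun u v : 'I_4 => P u v); split; [|split; [|split]].
- move=> u v h; apply: val_inj; exact: finj (ltn_ord u) (ltn_ord v) h.
- move=> u v huv; have huv4 : u < v < 4 by rewrite huv ltn_ord.
  apply: simple_of (huniq _ _ huv4) _ _ _ (hpath _ _ huv4).
  + apply/negP => /(hR _ _ _ huv4); rewrite hgf; apply/negP.
    exact: Rg_gf hij hjk kn huv4 (ltn_ord u).
  + apply/negP => /(hR _ _ _ huv4); rewrite hgf; apply/negP.
    exact: Rg_gf hij hjk kn huv4 (ltn_ord v).
  + apply/eqP => /(finj _ _ (ltn_ord u) (ltn_ord v)) huv'.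
    by move: huv; rewrite huv' ltnn.
- move=> u v w huv; have huv4 : u < v < 4 by rewrite huv ltn_ord.
  apply/negP => /(hR _ _ _ huv4); rewrite hgf; apply/negP.
  exact: Rg_gf hij hjk kn huv4 (ltn_ord w).
- move=> u v u' v' huv hu'v' neq w hw; apply/negP => hw'.
  have huv4 : u < v < 4 by rewrite huv ltn_ord.
  have hu'v'4 : u' < v' < 4 by rewrite hu'v' ltn_ord.
  have := Rg_disj hij hjk kn huv4 hu'v'4 (hR _ _ _ huv4 hw) (hR _ _ _ hu'v'4 hw').
  case/andP => /eqP h1 /eqP h2; apply: neq; congr pair; exact: val_inj.
Qed.

Lemma attach2 : ~ has_K4_subdivision e -> #|N| = 2.
Proof. move=> HK; apply/eqP; rewrite eqn_leq (partB HK) partA. by []. Qed.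

End Main.

Theorem claim2 (T : finType) (e : rel T)
  (Hsimple : simple_graph e)
  (Hsp : series_parallel e)
  (Hnotr : no_transitive_edges e)
  (Hle2 : forall s t, separation_pair e s t -> nheavy e s t <= 2)
  (s t : T) (Hst : separation_pair e s t)
  (Hmax : forall s' t', separation_pair e s' t' -> nheavy e s' t' <= nheavy e s t)
  (C1 C2 : {set T})
  (HC1 : C1 \in components e (~: [set s; t]))
  (HC2 : C2 \in components e (~: [set s; t]))
  (HC12 : C1 != C2)
  (Hheavy1 : 1 <= nheavy e s t -> heavy e s t C1)
  (Hheavy2 : nheavy e s t = 2 -> heavy e s t C2)
  (p1 p2 : seq T)
  (Hp1 : longest_st_path e s t C1 p1)
  (Hp2 : longest_st_path e s t C2 p2) :
  attach_two e s C1 p1 /\ attach_two e s C2 p2.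
Proof.
have esym := Hsimple.1; have [Hbi HK] := Hsp; have Hst' := Hst.1.
have HC21 : C2 != C1 by rewrite eq_sym.
split => X HXc.
- exact: (attach2 esym Hbi Hst' HC1 HC2 HC12 Hp1.1 HXc HK).
- exact: (attach2 esym Hbi Hst' HC2 HC1 HC21 Hp2.1 HXc HK).
Qed.
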